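(* Let $A$ be a Noetherian integral domain. Every sublocalization over $A$ is a localization of $A$ if and only if each associated prime of a principal ideal of $A$ is the radical of a principal ideal. In particular, if $A$ has these equivalent properties, then nonzero principal ideals of $A$ have no embedded associated primes.
   Context: For an integral domain $A$ with field of fractions $K$, an overring is a subring of $K$ containing $A$. An overring $B$ is a localization of $A$ if $B=S^{-1}A$ for a multiplicatively closed set $S$ of nonzero elements of $A$; $B$ is a sublocalization over $A$ if $B$ is an intersection of localizations of $A$ (an empty intersection being $K$). A prime $P$ of $A$ is an associated prime of an ideal $I$ if there is $a\in A$ such that $P$ is a minimal prime over $(I:_A a)=\{r\in A: ra\in I\}$. *)

(* Defs.v *)
From mathcomp Require Import all_boot all_algebra fraction.
Set Implicit Arguments. Unset Strict Implicit. Unset Printing Implicit Defensive.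
Import GRing.Theory.
Local Open Scope ring_scope.

Section Defs.
Variable R : idomainType.

Definition is_ideal (I : R -> Prop) : Prop :=
  [/\ I 0, (forall x y, I x -> I y -> I (x + y)) & (forall r x, I x -> I (r * x))].

Definition noetherian : Prop :=
  forall I : nat -> R -> Prop, (forall n, is_ideal (I n)) ->
    (forall n x, I n x -> I n.+1 x) ->
    exists N, forall m x, (N <= m)%N -> I m x -> I N x.

Definition is_prime (P : R -> Prop) : Prop :=
  [/\ is_ideal P, ~ P 1 & forall a b, P (a * b) -> P a \/ P b].

Definition principal (b : R) : R -> Prop := fun x => exists r, x = r * b.

Definition radical (J : R -> Prop) : R -> Prop := fun x => exists n, J (x ^+ n).

Definition colon (I : R -> Prop) (a : R) : R -> Prop := fun r => I (r * a).

Definition minimal_prime_over (J P : R -> Prop) : Prop :=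
  [/\ is_prime P, (forall x, J x -> P x) &
      forall Q, is_prime Q -> (forall x, J x -> Q x) -> (forall x, Q x -> P x) ->
        forall x, P x -> Q x].

Definition assoc_prime (I P : R -> Prop) : Prop :=
  exists a, minimal_prime_over (colon I a) P.

Definition K := {fraction R}.
Definition inK (a : R) : K := @FracField.tofrac R a.

Definition mult_closed_nonzero (S : R -> Prop) : Prop :=
  [/\ S 1, (forall s t, S s -> S t -> S (s * t)) & forall s, S s -> s != 0].

Definition is_localization (B : K -> Prop) : Prop :=
  exists S, mult_closed_nonzero S /\
    forall x, B x <-> exists a s, S s /\ x = inK a / inK s.

Definition is_sublocalization (B : K -> Prop) : Prop :=
  exists F : (K -> Prop) -> Prop, (forall L, F L -> is_localization L) /\
    forall x, B x <-> (forall L, F L -> L x).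

End Defs.

(* Main.v *)
Require Import Defs.
From mathcomp Require Import all_boot all_algebra fraction.
From mathcomp Require Import ring.
From Stdlib Require Import ClassicalEpsilon Classical.
Set Implicit Arguments. Unset Strict Implicit.
Import GRing.Theory.
Local Open Scope ring_scope.

Lemma MP (R : idomainType) (HN : noetherian R) (T : Type) (g : T -> R -> Prop)
  (good : T -> Prop) :
  (forall t, good t -> is_ideal (g t)) -> (exists t, good t) ->
  exists t, good t /\ forall t', good t' -> (forall x, g t x -> g t' x) ->
     forall x, g t' x -> g t x.
Proof.
move=> Hid [t0 Ht0].
apply: NNPP => Hno.
have step : forall t, good t -> exists t', good t' /\
   (forall x, g t x -> g t' x) /\ exists x, g t' x /\ ~ g t x.
  move=> t Ht; apply: NNPP => H1; apply: Hno; exists t; split => // t' Ht' Hsub x Hx.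
  apply: NNPP => Hnx; apply: H1; exists t'; split => //; split => //; by exists x.
have f : forall s : {t | good t}, {s' : {t | good t} |
   (forall x, g (sval s) x -> g (sval s') x) /\ exists x, g (sval s') x /\ ~ g (sval s) x}.
  move=> [t Ht]; apply: constructive_indefinite_description.
  have [t' [Ht' [H1 H2]]] := step t Ht.
  by exists (exist _ t' Ht').
pose F s := sval (f s).
pose s0 := exist good t0 Ht0.
pose ch n := sval (iter n F s0).
have Hid' : forall n, is_ideal (g (ch n)) by move=> n; apply: Hid; exact: (svalP (iter n F s0)).
have Hinc : forall n x, g (ch n) x -> g (ch n.+1) x.
  move=> n x; rewrite /ch iterS; exact: (proj1 (svalP (f (iter n F s0)))).
have [N HN'] := HN (fun n => g (ch n)) Hid' Hinc.
have [x [Hx Hnx]] := proj2 (svalP (f (iter N F s0))).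
apply: Hnx; exact: (HN' N.+1).
Qed.


Lemma ideal0 (R : idomainType) (I : R -> Prop) : is_ideal I -> I 0. Proof. by case. Qed.
Lemma idealD (R : idomainType) (I : R -> Prop) (x y : R) : is_ideal I -> I x -> I y -> I (x + y).
Proof. by case=> _ H _; apply: H. Qed.
Lemma idealM (R : idomainType) (I : R -> Prop) (r x : R) : is_ideal I -> I x -> I (r * x).
Proof. by case=> _ _ H; apply: H. Qed.
Lemma idealMr (R : idomainType) (I : R -> Prop) (r x : R) : is_ideal I -> I x -> I (x * r).
Proof. by move=> HI Hx; rewrite mulrC; apply: idealM. Qed.
Lemma idealN (R : idomainType) (I : R -> Prop) (x : R) : is_ideal I -> I x -> I (- x).
Proof. by move=> HI Hx; rewrite -mulN1r; apply: idealM. Qed.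
Lemma idealB (R : idomainType) (I : R -> Prop) (x y : R) : is_ideal I -> I x -> I y -> I (x - y).
Proof. by move=> HI Hx Hy; apply: idealD => //; apply: idealN. Qed.
Lemma ideal1 (R : idomainType) (I : R -> Prop) (x : R) : is_ideal I -> I 1 -> I x.
Proof. by move=> HI H1; rewrite -[x]mulr1; apply: idealM. Qed.

Lemma principal_ideal (R : idomainType) (b : R) : is_ideal (principal b).
Proof.
split; first by exists 0; rewrite mul0r.
- by move=> x y [r ->] [s ->]; exists (r + s); rewrite mulrDl.
- by move=> r x [s ->]; exists (r * s); rewrite mulrA.
Qed.
Lemma principal_self (R : idomainType) (b : R) : principal b b. Proof. by exists 1; rewrite mul1r. Qed.

Lemma colon_ideal (R : idomainType) (I : R -> Prop) (a : R) : is_ideal I -> is_ideal (colon I a).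
Proof.
move=> HI; split; rewrite /colon.
- by rewrite mul0r; apply: ideal0.
- by move=> x y Hx Hy; rewrite mulrDl; apply: idealD.
- by move=> r x Hx; rewrite -mulrA; apply: idealM.
Qed.

Definition sat (R : idomainType) (S : R -> Prop) (I : R -> Prop) : R -> Prop := fun x => exists t, S t /\ I (t * x).

Lemma sat_ideal (R : idomainType) (S : R -> Prop) (I : R -> Prop) : S 1 -> (forall s t, S s -> S t -> S (s * t)) ->
  is_ideal I -> is_ideal (sat S I).
Proof.
move=> S1 SM HI; split.
- by exists 1; split => //; rewrite mulr0; apply: ideal0.
- move=> x y [s [Ss Hx]] [t [St Hy]]; exists (s * t); split; first exact: SM.
  have -> : s * t * (x + y) = t * (s * x) + s * (t * y) by ring.
  by apply: idealD => //; apply: idealM.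
- move=> r x [s [Ss Hx]]; exists s; split => //.
  by rewrite mulrCA; apply: idealM.
Qed.

Lemma prime_ext (R : idomainType) (P Q : R -> Prop) : (forall x, P x <-> Q x) -> is_prime P -> is_prime Q.
Proof.
move=> E [[H0 HD HM] H1 HP]; split; first split.
- by apply/E.
- by move=> x y /E Hx /E Hy; apply/E; apply: HD.
- by move=> r x /E Hx; apply/E; apply: HM.
- by move=> /E.
- by move=> a b /E /HP [] /E; [left|right].
Qed.

Lemma prime_ideal (R : idomainType) (P : R -> Prop) : is_prime P -> is_ideal P. Proof. by case. Qed.
Lemma prime_not1 (R : idomainType) (P : R -> Prop) : is_prime P -> ~ P 1. Proof. by case. Qed.
Lemma primeM (R : idomainType) (P : R -> Prop) (a b : R) : is_prime P -> P (a * b) -> P a \/ P b.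
Proof. by case=> _ _; apply. Qed.

Lemma prime_pow (R : idomainType) (P : R -> Prop) (x : R) (n : nat) : is_prime P -> P (x ^+ n) -> P x.
Proof.
move=> HP; elim: n => [|n IH]; first by rewrite expr0 => /(prime_not1 HP).
by rewrite exprS => /(primeM HP) [] // /IH.
Qed.

Lemma prime_compl_mul (R : idomainType) (P : R -> Prop) (s t : R) : is_prime P -> ~ P s -> ~ P t -> ~ P (s * t).
Proof. by move=> HP Hs Ht /(primeM HP) []. Qed.


Lemma prin_mulE (R : idomainType) (b e1 e2 k : R) :
  e2 = k * e1 -> principal b e1 -> principal b e2.
Proof. by move=> -> H; apply: idealM => //; apply: principal_ideal. Qed.

Lemma colonG (R : idomainType) (HN : noetherian R) (S : R -> Prop) (b a : R) :
  S 1 -> (forall s t, S s -> S t -> S (s * t)) ->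
  (forall s, S s -> ~ colon (principal b) a s) ->
  exists y, is_prime (colon (principal b) (y * a)) /\
            forall s, S s -> ~ colon (principal b) (y * a) s.
Proof.
move=> S1 SM Hdis.
pose J y := colon (principal b) (y * a).
have HJ : forall y, is_ideal (J y) by move=> y; apply: colon_ideal; apply: principal_ideal.
pose I y := sat S (J y).
have HI : forall y, is_ideal (I y) by move=> y; apply: sat_ideal.
have ne : ~ I 1 1.
  move=> [t [St Ht]]; apply: (Hdis t St).
  by apply: (prin_mulE (k := 1)) Ht; rewrite /colon; ring.
have [y0 [Hg0 Hmax]] := MP HN (g := I) (good := fun y => ~ I y 1) (fun y _ => HI y)
  (ex_intro _ 1 ne).
have PI : is_prime (I y0).
  split => //.
  move=> a' b' Hab; case: (classic (I y0 a')) => Ha; [by left | right].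
  have Hsub : forall x, I y0 x -> I (a' * y0) x.
    move=> x [t [St Ht]]; exists t; split => //.
    by apply: (prin_mulE (k := a')) Ht; rewrite /colon; ring.
  have Hgood : ~ I (a' * y0) 1.
    move=> [t [St Ht]]; apply: Ha; exists t; split => //.
    by apply: (prin_mulE (k := 1)) Ht; rewrite /colon; ring.
  apply: (Hmax _ Hgood Hsub).
  case: Hab => t [St Ht]; exists t; split => //.
  by apply: (prin_mulE (k := 1)) Ht; rewrite /colon; ring.
have [z0 [Sz0 Hmax2]] := MP HN (g := fun z => J (z * y0)) (good := S)
  (fun z _ => HJ (z * y0)) (ex_intro _ 1 S1).
have E : forall r, I y0 r <-> J (z0 * y0) r.
  move=> r; split.
  - move=> [t [St Ht]].
    have Hs : forall x, J (z0 * y0) x -> J ((t * z0) * y0) x.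
      move=> x Hx; apply: (prin_mulE (k := t)) Hx; rewrite /colon; ring.
    apply: (Hmax2 _ (SM _ _ St Sz0) Hs).
    by apply: (prin_mulE (k := z0)) Ht; rewrite /colon; ring.
  - move=> Hr; exists z0; split => //.
    by apply: (prin_mulE (k := 1)) Hr; rewrite /colon; ring.
exists (z0 * y0); split.
- exact: (prime_ext E PI).
- move=> s Ss /E [t [St Ht]]; apply: Hg0; exists (t * s); split; first exact: SM.
  by apply: (prin_mulE (k := 1)) Ht; rewrite /colon; ring.
Qed.

Local Open Scope quotient_scope.

Lemma frac_repr (R : idomainType) (x : K R) :
  exists n d : R, d != 0 /\ x = inK n / inK d.
Proof.
rewrite /inK -[x]reprK.
set r := repr x.
exists (frac r).1, (frac r).2; split; first exact: denom_ratioP.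
have E : \pi_({fraction R}) r = \pi_({fraction R}) (FracField.mulf (Ratio (frac r).1 1) (FracField.invf (Ratio (frac r).2 1))).
  apply/eqmodP => /=.
  rewrite /FracField.mulf /FracField.invf FracField.equivfE.
  rewrite !numden_Ratio ?oner_neq0 ?denom_ratioP ?mulr1 ?mul1r ?mulf_neq0 ?oner_neq0 ?denom_ratioP //.
  by rewrite mulrC.
rewrite E FracField.pi_mul FracField.pi_inv.
unlock FracField.tofrac.
reflexivity.
Qed.

Lemma inK_neq0 (R : idomainType) (b : R) : b != 0 -> inK b != 0.
Proof. by rewrite /inK tofrac_eq0. Qed.

Lemma frac_eq (R : idomainType) (a b c d : R) : b != 0 -> d != 0 ->
  (inK a / inK b = inK c / inK d) <-> a * d = c * b.
Proof.
move=> b0 d0; have b0' := inK_neq0 b0; have d0' := inK_neq0 d0.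
split.
- move=> /eqP; rewrite eqr_div // /inK -!tofracM tofrac_eq => /eqP.
  by [].
- by move=> E; apply/eqP; rewrite eqr_div // /inK -!tofracM E.
Qed.

Lemma inK_mul (R : idomainType) (a b : R) : inK (a * b) = inK a * inK b.
Proof. by rewrite /inK tofracM. Qed.
Lemma inK_1 (R : idomainType) : inK (1 : R) = 1.
Proof. by rewrite /inK tofrac1. Qed.


Lemma mcn_pow (R : idomainType) (T : R -> Prop) t n : mult_closed_nonzero T -> T t -> T (t ^+ n).
Proof.
move=> [T1 TM _] Tt; elim: n => [|n IH]; first by rewrite expr0.
by rewrite exprS; apply: TM.
Qed.

Lemma loc_mul (R : idomainType) (L : K R -> Prop) : is_localization L -> forall x y, L x -> L y -> L (x * y).
Proof.
move=> [T [[T1 TM T0] HL]] x y /HL [a [s [Ts ->]]] /HL [a' [s' [Ts' ->]]].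
apply/HL; exists (a * a'), (s * s'); split; first exact: TM.
by rewrite !inK_mul invfM; ring.
Qed.

Lemma loc_inK (R : idomainType) (L : K R -> Prop) : is_localization L -> forall a, L (inK a).
Proof.
move=> [T [[T1 TM T0] HL]] a; apply/HL; exists a, 1; split => //.
by rewrite inK_1 invr1 mulr1.
Qed.

Definition locQ (R : idomainType) (Q : R -> Prop) : K R -> Prop :=
  fun x => exists a s, ~ Q s /\ x = inK a / inK s.

Lemma locQ_loc (R : idomainType) (Q : R -> Prop) : is_prime Q -> is_localization (locQ Q).
Proof.
move=> HQ; exists (fun s => ~ Q s); split => //; split.
- exact: prime_not1.
- by move=> s t; apply: prime_compl_mul.
- move=> s Hs; apply/eqP => s0; apply: Hs; rewrite s0; apply: ideal0; exact: prime_ideal.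
Qed.


Close Scope quotient_scope.

Lemma part1_if (R : idomainType) (HN : noetherian R) :
  (forall (b : R) (P : R -> Prop), assoc_prime (principal b) P ->
      exists c : R, forall x, P x <-> radical (principal c) x) ->
  forall B : K R -> Prop, is_sublocalization B -> is_localization B.
Proof.
move=> H2 B [F [HF HB]].
pose S (s : R) := s != 0 /\ forall L, F L -> L (inK 1 / inK s).
have S1 : S 1.
  split; first exact: oner_neq0.
  by move=> L FL; rewrite inK_1 divr1 -inK_1; apply: loc_inK; apply: HF.
have SM : forall s t, S s -> S t -> S (s * t).
  move=> s t [s0 Hs] [t0 Ht]; split; first by rewrite mulf_neq0.
  move=> L FL.
  have -> : inK 1 / inK (s * t) = (inK 1 / inK s) * (inK 1 / inK t).
    by rewrite inK_mul inK_1 !mul1r invfM.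
  by apply: loc_mul; [apply: HF| apply: Hs| apply: Ht].
exists S; split; first by split => // s [].
move=> x; split; last first.
  move=> [a [s [[s0 Hs] ->]]]; apply/HB => L FL.
  have -> : inK a / inK s = inK a * (inK 1 / inK s) by rewrite inK_1 mul1r.
  by apply: loc_mul; [apply: HF | apply: loc_inK; apply: HF | apply: Hs].
move=> Bx; apply: NNPP => Hno.
have [n [d [d0 Ex]]] := frac_repr x.
have Hdis : forall s, S s -> ~ colon (principal d) n s.
  move=> s Ss [r Hr]; apply: Hno; exists r, s; split => //.
  rewrite Ex; apply: (proj2 (frac_eq _ _ d0 (proj1 Ss))).
  by rewrite mulrC Hr.
have [y [Hpr HdisQ]] := colonG HN S1 SM Hdis.
set Q := colon (principal d) (y * n) in Hpr HdisQ.
have HassQ : assoc_prime (principal d) Q.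
  by exists (y * n); split => // Q' _ _ H; exact: H.
have [c Ec] := H2 d Q HassQ.
have Qc : Q c by apply/Ec; exists 1%N; rewrite expr1; exact: principal_self.
have c0 : c != 0.
  apply/eqP => c0.
  have Qd : Q d by exists (y * n); rewrite /= mulrC.
  move: Qd => /Ec [k [r]]; rewrite c0 mulr0 => /eqP; rewrite expf_eq0 => /andP [_ /eqP d00].
  by move: d0; rewrite d00 eqxx.
have [L [FL nL]] : exists L, F L /\ ~ L (inK 1 / inK c).
  apply: NNPP => H; apply: (HdisQ c) => //; split => // L FL.
  apply: NNPP => nL; apply: H; by exists L.
have [T [[T1 TM T0] HL]] := HF L FL.
have [a [t [Tt Ext]]] := (HL x).1 ((HB x).1 Bx L FL).
have nQt : ~ Q t.
  move=> /Ec [k [r Hk]]; apply: nL; apply/HL; exists r, (t ^+ k); split.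
    by apply: mcn_pow.
  have tk0 : t ^+ k != 0 by rewrite expf_neq0 // T0.
  apply: (proj2 (frac_eq _ _ c0 tk0)).
  by rewrite mul1r Hk.
apply: nQt; exists (y * a).
have : n * t = a * d by apply: (proj1 (frac_eq _ _ d0 (T0 _ Tt))); rewrite -Ex -Ext.
move=> E.
have -> : t * (y * n) = y * (n * t) by ring.
by rewrite E; ring.
Qed.

Lemma ideal_add_elt (R : idomainType) (I : R -> Prop) (a : R) : is_ideal I ->
  is_ideal (fun z => exists m r, I m /\ z = m + r * a).
Proof.
move=> HI; split.
- by exists 0, 0; split; [apply: ideal0 | rewrite mul0r addr0].
- move=> x y [m [r [Hm ->]]] [m' [r' [Hm' ->]]]; exists (m + m'), (r + r'); split.
    exact: idealD.
  by ring.
- move=> s x [m [r [Hm ->]]]; exists (s * m), (s * r); split; first exact: idealM.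
  by ring.
Qed.

Lemma Rad (R : idomainType) (HN : noetherian R) (c p : R) :
  ~ (exists n, principal c (p ^+ n)) -> exists M, is_prime M /\ M c /\ ~ M p.
Proof.
move=> Hn.
pose good (I : R -> Prop) := [/\ is_ideal I, I c & forall n, ~ I (p ^+ n)].
have ne : good (principal c).
  split; [exact: principal_ideal | exact: principal_self | by move=> n H; apply: Hn; exists n].
have [M [[HM Mc Mp] Hmax]] := MP HN (g := id) (good := good) (fun t g => let: And3 h _ _ := g in h)
   (ex_intro _ _ ne).
exists M; split; last first.
  by split => // H; apply: (Mp 1%N); rewrite expr1.
split => //; first by move=> H; apply: (Mp 0%N); rewrite expr0.
move=> a b Hab.
case: (classic (M a)) => Ha; first by left.
case: (classic (M b)) => Hb; first by right.
exfalso.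
have key : forall e, ~ M e -> exists i m r, M m /\ p ^+ i = m + r * e.
  move=> e He.
  pose Me := fun z => exists m r, M m /\ z = m + r * e.
  have HMe : is_ideal Me by apply: ideal_add_elt.
  have sub : forall x, id M x -> id Me x.
    by move=> x Hx; exists x, 0; split => //; rewrite mul0r addr0.
  apply: NNPP => H.
  have gMe : good Me.
    split => //; first by apply: sub.
    move=> n [m [r [Hm Hr]]]; apply: H; exists n, m, r; split => //.
  apply: He; apply: (Hmax Me gMe sub).
  by exists 0, 1; split; [apply: ideal0 | rewrite mul1r add0r].
have [i [m1 [r1 [Hm1 E1]]]] := key a Ha.
have [j [m2 [r2 [Hm2 E2]]]] := key b Hb.
apply: (Mp (i + j)%N).
have -> : p ^+ (i + j) = m1 * (m2 + r2 * b) + m2 * (r1 * a) + (r1 * r2) * (a * b).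
  by rewrite exprD E1 E2; ring.
have HM' : is_ideal M by [].
apply: (idealD HM'); [apply: (idealD HM')|].
- by rewrite mulrC; apply: (idealM _ HM').
- by rewrite mulrC; apply: (idealM _ HM').
- by apply: (idealM _ HM').
Qed.

Lemma strong_assoc (R : idomainType) (HN : noetherian R) (b : R) (P : R -> Prop) :
  assoc_prime (principal b) P ->
  exists w, forall x, P x <-> colon (principal b) w x.
Proof.
move=> [a [HPp HJP Hmin]].
have S1 : ~ P 1 by apply: prime_not1.
have SM : forall s t, ~ P s -> ~ P t -> ~ P (s * t) by move=> s t; apply: prime_compl_mul.
have Hdis : forall s, ~ P s -> ~ colon (principal b) a s by move=> s Hs /HJP.
have [y [Hpr Hd]] := colonG HN S1 SM Hdis.
exists (y * a) => x; split.
- apply: (Hmin _ Hpr).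
  + move=> z Hz; apply: (prin_mulE (k := y)) Hz; rewrite /colon; ring.
  + by move=> z Hz; apply: NNPP => Hn; apply: (Hd z Hn).
- by move=> Hx; apply: NNPP => Hn; apply: (Hd x Hn).
Qed.

Lemma rad0 (R : idomainType) (x : R) : radical (principal 0) x <-> x = 0.
Proof.
split.
- move=> [n [r]]; rewrite mulr0 => /eqP; rewrite expf_eq0 => /andP [_ /eqP] //.
- by move=> ->; exists 1%N, 0; rewrite expr1 mulr0.
Qed.

Lemma part1_onlyif (R : idomainType) (HN : noetherian R) :
  (forall B : K R -> Prop, is_sublocalization B -> is_localization B) ->
  forall (b : R) (P : R -> Prop), assoc_prime (principal b) P ->
      exists c : R, forall x, P x <-> radical (principal c) x.
Proof.
move=> Hsub b P HA.
have HPp : is_prime P by case: HA => a [].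
have [w Ew] := strong_assoc HN HA.
case: (eqVneq b 0) => [b0|b0].
  exists 0 => x; rewrite rad0; split.
  - move=> /Ew [r]; rewrite b0 mulr0 => /eqP; rewrite mulf_eq0; case/orP => /eqP H //.
    exfalso; apply: (prime_not1 HPp); apply/Ew; exists 0; by rewrite H mulr0 mul0r.
  - by move=> ->; exact: (ideal0 (prime_ideal HPp)).
pose F (L : K R -> Prop) := exists Q, is_prime Q /\ ~ (forall x, P x -> Q x) /\ L = locQ Q.
pose B (x : K R) := forall L, F L -> L x.
have HB : is_sublocalization B.
  exists F; split => //.
  by move=> L [Q [HQ [_ ->]]]; apply: locQ_loc.
have [S [[S1 SM S0] HS]] := Hsub B HB.
case: (classic (exists c, S c /\ P c)) => [[c [Sc Pc]]|Hno].
- exists c => x; split; last first.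
    move=> [n Hn]; apply: (prime_pow (n := n) HPp).
    by case: Hn => r ->; apply: (idealM _ (prime_ideal HPp) Pc).
  move=> Px; apply: NNPP => Hn.
  have [M [HM [Mc Mx]]] := Rad HN Hn.
  have B1c : B (inK 1 / inK c) by apply/HS; exists 1, c.
  have [a' [s' [Ms' E]]] : locQ M (inK 1 / inK c).
    apply: B1c; exists M; split => //; split => // H; apply: Mx; exact: H.
  have s0 : s' != 0.
    by apply/eqP => s0; apply: Ms'; rewrite s0; exact: (ideal0 (prime_ideal HM)).
  have := proj1 (frac_eq _ _ (S0 _ Sc) s0) E; rewrite mul1r => Es; apply: Ms'; rewrite Es.
  exact: (idealM _ (prime_ideal HM) Mc).
- exfalso.
  have Bx : B (inK w / inK b).
    move=> L [Q [HQ [HnPQ ->]]].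
    have [p [Pp Qp]] : exists p, P p /\ ~ Q p.
      apply: NNPP => H; apply: HnPQ => z Pz; apply: NNPP => Qz; apply: H; by exists z.
    have p0 : p != 0.
      by apply/eqP => p0; apply: Qp; rewrite p0; exact: (ideal0 (prime_ideal HQ)).
    have [r Hr] := (Ew p).1 Pp.
    exists r, p; split => //.
    by apply: (proj2 (frac_eq _ _ b0 p0)); rewrite mulrC Hr.
  have [a' [s [Ss E]]] := (HS _).1 Bx.
  apply: Hno; exists s; split => //.
  apply/Ew; exists a'.
  by have := proj1 (frac_eq _ _ b0 (S0 _ Ss)) E; rewrite mulrC.
Qed.

Fixpoint span (R : idomainType) (l : seq R) : R -> Prop :=
  match l with
  | [::] => fun x => x = 0
  | g :: l' => fun x => exists r y, span l' y /\ x = r * g + y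
  end.

Lemma span_ideal (R : idomainType) (l : seq R) : is_ideal (span l).
Proof.
elim: l => [|g l IH] /=.
  split => //; [by move=> x y -> ->; rewrite addr0 | by move=> r x ->; rewrite mulr0].
split.
- by exists 0, 0; split; [apply: ideal0 | rewrite mul0r addr0].
- move=> x y [r [u [Hu ->]]] [r' [u' [Hu' ->]]]; exists (r + r'), (u + u'); split.
    exact: idealD.
  by ring.
- move=> s x [r [u [Hu ->]]]; exists (s * r), (s * u); split; first exact: idealM.
  by ring.
Qed.

Lemma fg (R : idomainType) (HN : noetherian R) (M : R -> Prop) : is_ideal M ->
  exists l : seq R, (forall g, List.In g l -> M g) /\ forall x, M x -> span l x.
Proof.
move=> HM.
have ne : exists l : seq R, forall g, List.In g l -> M g by exists [::].
have [l0 [Hl0 Hmax]] := MP HN (g := @span R) (good := fun l => forall g, List.In g l -> M g)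
  (fun l _ => span_ideal l) ne.
exists l0; split => // x Mx; apply: NNPP => Hx.
have good' : forall g, List.In g (x :: l0) -> M g by move=> g /= [<-|/Hl0].
have sub : forall z, span l0 z -> span (x :: l0) z.
  by move=> z Hz; exists 0, z; split => //; rewrite mul0r add0r.
apply: Hx; apply: (Hmax _ good' sub).
exists 1, 0; split; first exact: (ideal0 (span_ideal l0)).
by rewrite mul1r addr0.
Qed.

Lemma nak (R : idomainType) (P : R -> Prop) (HP : is_prime P) (c : R) (Pc : P c)
  (L M : R -> Prop) (HL : is_ideal L) (HM : is_ideal M) :
  (forall x, M x -> exists t y z, ~ P t /\ L y /\ M z /\ t * x = y + c * z) ->
  forall l, (forall g, List.In g l -> M g) ->
  (forall x, M x -> exists t y e, ~ P t /\ L y /\ span l e /\ t * x = y + e) ->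
  forall x, M x -> exists t, ~ P t /\ L (t * x).
Proof.
move=> Hnak; elim => [|g l IH] Hl Hsp.
  move=> x /Hsp [t [y [e [Pt [Ly [/= -> E]]]]]]; exists t; split => //.
  by rewrite E addr0.
apply: IH; first by move=> h Hh; apply: Hl; right.
have Mg : M g by apply: Hl; left.
have [t1 [y1 [z1 [Pt1 [Ly1 [Mz1 Ht1]]]]]] := Hnak g Mg.
have [t2 [y2 [e2 [Pt2 [Ly2 [[r2 [e2' [He2' He2]]] Ht2]]]]]] := Hsp z1 Mz1.
pose u := t2 * t1 - c * r2.
have Pu : ~ P u.
  move=> Pu; apply: (prime_compl_mul HP Pt2 Pt1).
  have -> : t2 * t1 = u + r2 * c by rewrite /u; ring.
  apply: (idealD (prime_ideal HP)) => //; exact: (idealM _ (prime_ideal HP)).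
have Hug : u * g = t2 * y1 + c * y2 + c * e2'.
  have -> : u * g = t2 * (t1 * g) - c * r2 * g by rewrite /u; ring.
  rewrite Ht1.
  have -> : t2 * (y1 + c * z1) - c * r2 * g = t2 * y1 + c * (t2 * z1) - c * r2 * g by ring.
  rewrite Ht2 He2; ring.
move=> x Mx.
have [t [y [e [Pt [Ly [[r [e' [He' He]]] Ht]]]]]] := Hsp x Mx.
exists (u * t), (u * y + r * (t2 * y1 + c * y2)), ((r * c) * e2' + u * e'); split.
  exact: prime_compl_mul.
split.
  apply: (idealD HL); first exact: (idealM _ HL).
  apply: (idealM _ HL); apply: (idealD HL); first exact: (idealM _ HL).
  exact: (idealM _ HL).
split.
  apply: (idealD (span_ideal l)); exact: (idealM _ (span_ideal l)).
have -> : u * t * x = u * (t * x) by ring.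
rewrite Ht He.
have -> : u * (y + (r * g + e')) = u * y + r * (u * g) + u * e' by ring.
rewrite Hug; ring.
Qed.

Lemma sat_sat (R : idomainType) (S I : R -> Prop) :
  (forall s t, S s -> S t -> S (s * t)) -> forall x, sat S (sat S I) x -> sat S I x.
Proof.
move=> SM x [t1 [St1 [t2 [St2 H]]]]; exists (t2 * t1); split; first exact: SM.
by rewrite -mulrA.
Qed.

Lemma desc_le (R : idomainType) (J : nat -> R -> Prop) :
  (forall n x, J n.+1 x -> J n x) -> forall n m x, (n <= m)%N -> J m x -> J n x.
Proof.
move=> Hd n m x /subnKC <-; elim: (m - n)%N => [|k IH]; first by rewrite addn0.
by rewrite addnS => /Hd /IH.
Qed.

Lemma assoc_x (R : idomainType) (HN : noetherian R) (P : R -> Prop) (c : R)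
  (Hrad : forall Q, is_prime Q -> Q c -> forall x, P x -> Q x) (I0 : R -> Prop) :
  is_ideal I0 -> ~ I0 1 -> I0 c ->
  exists x0, ~ I0 x0 /\ forall p, P p -> I0 (p * x0).
Proof.
move=> HI n1 Ic.
have ne : exists y, ~ I0 y by exists 1.
have [y0 [Hy0 Hmax]] := MP HN (g := colon I0) (good := fun y => ~ I0 y)
  (fun y _ => colon_ideal y HI) ne.
exists y0; split => //.
have PM : is_prime (colon I0 y0).
  split; first exact: colon_ideal.
    by rewrite /colon mul1r.
  move=> a b Hab; case: (classic (colon I0 y0 a)) => Ha; [by left|right].
  have sub : forall x, colon I0 y0 x -> colon I0 (a * y0) x.
    by move=> x; rewrite /colon => Hx; rewrite mulrCA; exact: (idealM _ HI Hx).
  apply: (Hmax _ Ha sub).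
  by rewrite /colon mulrA [b * a]mulrC.
apply: (Hrad _ PM).
by rewrite /colon; exact: (idealMr _ HI Ic).
Qed.

Definition chain_ok (R : idomainType) (P : R -> Prop) (c : R) (J : nat -> R -> Prop) :=
  [/\ forall n, is_ideal (J n), forall n x, sat (fun t => ~ P t) (J n) x -> J n x,
      forall n, J n c & forall n x, J n.+1 x -> J n x].

Definition dgood (R : idomainType) (P : R -> Prop) (c : R) (I : R -> Prop) :=
  forall J, chain_ok P c J -> (forall n x, I x -> J n x) ->
    exists N, forall m, (N <= m)%N -> forall x, J N x -> J m x.

Lemma dcc_all (R : idomainType) (HN : noetherian R) (P : R -> Prop) (HP : is_prime P) (c : R)
  (Hrad : forall Q, is_prime Q -> Q c -> forall x, P x -> Q x) :
  forall I, is_ideal I -> (forall x, sat (fun t => ~ P t) I x -> I x) -> I c -> dgood P c I.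
Proof.
have S1 : ~ P 1 by apply: prime_not1.
have SM : forall s t, ~ P s -> ~ P t -> ~ P (s * t) by move=> s t; apply: prime_compl_mul.
pose bad I := [/\ is_ideal I, (forall x, sat (fun t => ~ P t) I x -> I x), I c & ~ dgood P c I].
move=> I HI HsI Ic; apply: NNPP => nG.
have [I0 [[HI0 Hs0 Ic0 nG0] Hmax]] := MP HN (g := id) (good := bad)
  (fun t (b : bad t) => let: And4 h _ _ _ := b in h) (ex_intro _ I (And4 HI HsI Ic nG)).
apply: nG0 => J [HJ HJs HJc HJd] HIJ.
case: (classic (I0 1)) => [I01|nI01].
  exists 0%N => m _ x _; apply: (HJs m x); exists 1; split => //.
  by rewrite mul1r; apply: (@ideal1 R (J m) _ (HJ m)); apply: HIJ.
have [x0 [nIx0 Hx0]] := assoc_x HN Hrad HI0 nI01 Ic0.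
pose L := sat (fun t => ~ P t) (fun z => exists i r, I0 i /\ z = i + r * x0).
have HL : is_ideal L by apply: sat_ideal => //; apply: ideal_add_elt.
have HLs : forall x, sat (fun t => ~ P t) L x -> L x by apply: sat_sat.
have Lc : L c by exists 1; split => //; exists c, 0; split => //; ring.
have I0L : forall x, id I0 x -> id L x.
  by move=> x Hx; exists 1; split => //; exists x, 0; split => //; ring.
have gL : dgood P c L.
  apply: NNPP => nGL.
  apply: nIx0; apply: (Hmax L (And4 HL HLs Lc nGL) I0L x0).
  exists 1; split => //; exists 0, 1; split; [exact: ideal0|ring].
case: (classic (forall n, J n x0)) => [Hall|].
  apply: gL => //.
  move=> n x [t [Pt [i [r [Ii E]]]]]; apply: (HJs n x); exists t; split => //; rewrite E.
  apply: (idealD (HJ n)); first by apply: HIJ.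
  by apply: (idealM _ (HJ n)).
move=> /not_all_ex_not [n0 nJ0].
pose J' n := sat (fun t => ~ P t) (fun z => exists j r, J n j /\ z = j + r * x0).
have cJ' : chain_ok P c J'.
  split.
  - by move=> n; apply: sat_ideal => //; apply: ideal_add_elt.
  - by move=> n; apply: sat_sat.
  - by move=> n; exists 1; split => //; exists c, 0; split => //; ring.
  - move=> n x [t [Pt [j [r [Jj E]]]]]; exists t; split => //; exists j, r; split => //.
    exact: HJd.
have LJ' : forall n x, L x -> J' n x.
  move=> n x [t [Pt [i [r [Ii E]]]]]; exists t; split => //; exists i, r; split => //.
  exact: HIJ.
have [N1 HN1] := gL J' cJ' LJ'.
exists (N1 + n0)%N => m Hm x Jx.
have J'x : J' (N1 + n0)%N x by exists 1; split => //; exists x, 0; split => //; ring.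
have J'N1 : J' N1 x.
  apply: (desc_le (J := J') _ (m := (N1 + n0)%N)) => //; first by case: cJ'.
  exact: leq_addr.
have [t [Pt [j [r [Jj E]]]]] := HN1 m (leq_trans (leq_addr _ _) Hm) x J'N1.
have Irx : I0 (r * x0).
  apply: NNPP => nI; case: (classic (P r)) => Pr; first exact: nI (Hx0 r Pr).
  apply: nJ0; apply: (desc_le HJd (m := (N1 + n0)%N)); first exact: leq_addl.
  apply: (HJs _ x0); exists r; split => //.
  have -> : r * x0 = t * x - j by rewrite E; ring.
  apply: (idealB (HJ _)); first exact: (idealM _ (HJ _)).
  exact: (desc_le HJd Hm).
apply: (HJs m x); exists t; split => //; rewrite E.
apply: (idealD (HJ m)) => //; exact: HIJ.
Qed.

Lemma pit (R : idomainType) (HN : noetherian R) (P : R -> Prop) (HP : is_prime P) (c : R)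
  (Pc : P c) (Hrad : forall Q, is_prime Q -> Q c -> forall x, P x -> Q x)
  (Q : R -> Prop) (HQ : is_prime Q) (QP : forall x, Q x -> P x)
  (nPQ : ~ (forall x, P x -> Q x)) (q : R) (Qq : Q q) (q0 : q != 0) : False.
Proof.
have cQ : ~ Q c by move=> Qc; apply: nPQ; apply: Hrad.
have SQ1 : ~ Q 1 by apply: prime_not1.
have SQM : forall s t, ~ Q s -> ~ Q t -> ~ Q (s * t) by move=> s t; apply: prime_compl_mul.
have SP1 : ~ P 1 by apply: prime_not1.
have SPM : forall s t, ~ P s -> ~ P t -> ~ P (s * t) by move=> s t; apply: prime_compl_mul.
pose I n := sat (fun s => ~ Q s) (principal (q ^+ n)).
have HI : forall n, is_ideal (I n) by move=> n; apply: sat_ideal => //; apply: principal_ideal.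
have Id : forall n x, I n.+1 x -> I n x.
  move=> n x [s [Qs [r E]]]; exists s; split => //; exists (r * q).
  by rewrite E exprS; ring.
pose J n := sat (fun t => ~ P t) (fun z => exists m r, I n m /\ z = m + r * c).
have cJ : chain_ok P c J.
  split.
  - by move=> n; apply: sat_ideal => //; apply: ideal_add_elt.
  - by move=> n; apply: sat_sat.
  - move=> n; exists 1; split => //; exists 0, 1; split; first exact: ideal0.
    by ring.
  - move=> n x [t [Pt [m [r [Im E]]]]]; exists t; split => //; exists m, r; split => //.
    exact: Id.
case: (cJ) => HJi HJs HJc HJd.
pose I0 := fun x => forall n, J n x.
have HI0 : is_ideal I0.
  split.
  - by move=> n; apply: (ideal0 (HJi n)).
  - by move=> x y Hx Hy n; apply: (idealD (HJi n)).
  - by move=> r x Hx n; apply: (idealM _ (HJi n)).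
have HI0s : forall x, sat (fun t => ~ P t) I0 x -> I0 x.
  by move=> x [t [Pt H]] n; apply: HJs; exists t; split.
have HI0c : I0 c by [].
have [N HNd] := dcc_all HN HP Hrad HI0 HI0s HI0c cJ (fun n x H => H n).
have Hnak : forall x, I N x -> exists t y z, ~ P t /\ I N.+1 y /\ I N z /\ t * x = y + c * z.
  move=> x Ix.
  have JN : J N x by exists 1; split => //; exists x, 0; split => //; ring.
  have [t [Pt [m [r [Im E]]]]] := HNd N.+1 (leqnSn N) x JN.
  exists t, m, r; split => //; split => //; split; last by rewrite E; ring.
  have : I N (c * r).
    have -> : c * r = t * x - m by rewrite E; ring.
    apply: (idealB (HI N)); first exact: (idealM _ (HI N)).
    exact: Id.
  move=> [s [Qs Hs]]; exists (s * c); split; first exact: SQM.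
  by rewrite -mulrA.
have [l [Hl Hsp]] := fg HN (HI N).
have := nak HP Pc (HI N.+1) (HI N) Hnak Hl.
move=> /(_ (ltac:(move=> x Ix; exists 1, 0, x; split => //; split; first exact: ideal0;
                 split; [exact: Hsp | ring]))).
move=> /(_ (q ^+ N)) [].
  by exists 1; split => //; exists 1; ring.
move=> t [Pt [s [Qs [r E]]]].
have E' : (s * t) * q ^+ N = (r * q) * q ^+ N by rewrite -mulrA E exprS; ring.
have := mulIf (expf_neq0 N q0) E' => Est.
have : Q (s * t) by rewrite Est; exact: (idealM _ (prime_ideal HQ) Qq).
case/(primeM HQ) => // Qt; apply: Pt; exact: QP.
Qed.

Lemma part2 (R : idomainType) (HN : noetherian R)
  (H2 : forall (b : R) (P : R -> Prop), assoc_prime (principal b) P ->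
      exists c : R, forall x, P x <-> radical (principal c) x)
  (b : R) (b0 : b != 0) (P Q : R -> Prop)
  (HPa : assoc_prime (principal b) P) (HQa : assoc_prime (principal b) Q)
  (QP : forall x, Q x -> P x) : forall x, P x -> Q x.
Proof.
apply: NNPP => nPQ.
have [c Ec] := H2 b P HPa.
have HP : is_prime P by case: HPa => a [].
have HQ : is_prime Q by case: HQa => a [].
have Pc : P c by apply/Ec; exists 1%N; rewrite expr1; exact: principal_self.
have Hrad : forall Q', is_prime Q' -> Q' c -> forall x, P x -> Q' x.
  move=> Q' HQ' Qc x /Ec [n [r E]]; apply: (prime_pow (n := n) HQ').
  by rewrite E; exact: (idealM _ (prime_ideal HQ') Qc).
have Qb : Q b.
  by case: HQa => a [_ HJ _]; apply: HJ; exists a; rewrite mulrC.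
exact: (pit HN HP Pc Hrad HQ QP nPQ Qb b0).
Qed.

Unset Implicit Arguments.

Theorem corollary2p8 (R : idomainType) (HN : noetherian R) :
  ((forall B : K R -> Prop, is_sublocalization B -> is_localization B) <->
   (forall (b : R) (P : R -> Prop), assoc_prime (principal b) P ->
      exists c : R, forall x, P x <-> radical (principal c) x)) /\
  ((forall (b : R) (P : R -> Prop), assoc_prime (principal b) P ->
      exists c : R, forall x, P x <-> radical (principal c) x) ->
   forall b : R, b != 0 -> forall P Q : R -> Prop,
     assoc_prime (principal b) P -> assoc_prime (principal b) Q ->
     (forall x, Q x -> P x) -> forall x, P x -> Q x).
Proof.
split.
- split; [exact: part1_onlyif | exact: part1_if].
- move=> H2 b b0 P Q HP HQ QP; exact: (part2 HN H2 b0 HP HQ QP).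
Qed.
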